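(* Let $\alpha\in(0,1]$, $\gamma\geqslant0$, and let $g,g_0,g_1:(0,\infty)^2\to\mathbb{R}$ with $g>0$, $g_0\geqslant0$, $g_1\geqslant0$, $g=g_0+g_1$, such that (i) $e^{\gamma(x+y)}g(x,y)=e^{\gamma(1/x+1/y)}g(1/x,1/y)$ for all $x,y>0$; (ii) $g_1(x,y)\leqslant e^{-\alpha\gamma(x-x')}g_1(x',y)$ for all $0<x'\leqslant x$, $y>0$, and $g_1(x,y)\leqslant e^{-\alpha\gamma(y-y')}g_1(x,y')$ for all $0<y'\leqslant y$, $x>0$. Then for every $(x,y)\in\Omega_\alpha$ the algorithm $\mathsf{B}_\alpha$ (see context) started at $(x,y)$ is well defined and stops after a finite number $N$ of points $(x_1,y_1),\dots,(x_N,y_N)$, and $$g(x,y)\leqslant\sum_{i=1}^N g_0(x_i,y_i)+g_1(x_N,y_N).$$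
   Context: Let $f_\alpha(x)=\max\left\{\frac1x,\ \frac12\left(\alpha(2-x)+\sqrt{\alpha^2(2-x)^2+4(1-\alpha)}\right)\right\}$ and $\Omega_\alpha=\{(x,y): x>1,\ y>f_\alpha(x)\}\cup\{(x,y): y>1,\ x>f_\alpha(y)\}$. Algorithm $\mathsf{B}_\alpha$: set $(x_1,y_1)=(x,y)$. Given $(a,b)=(x_i,y_i)$: (1) if $a>1$ and $b>1$, stop and set $N=i$. (2) If $a\leqslant1$: put $\tilde a=a$ if $a<1$ and $\tilde a=\frac{2}{\alpha(b-1)+2}$ if $a=1$; let $s>0$ be the unique positive solution of $\alpha b+\tilde a-\frac1{\tilde a}+(1-\alpha)s-\frac1s=0$; set $(x_{i+1},y_{i+1})=(1/\tilde a,\ 1/s)$. (3) Otherwise ($a>1$, $b\leqslant1$): same with the roles of the two coordinates exchanged, i.e. $\tilde b=b$ if $b<1$, $\tilde b=\frac{2}{\alpha(a-1)+2}$ if $b=1$, $s>0$ the unique positive solution of $\alpha a+\tilde b-\frac1{\tilde b}+(1-\alpha)s-\frac1s=0$, and $(x_{i+1},y_{i+1})=(1/s,\ 1/\tilde b)$. *)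

(* Defs.v *)
From Stdlib Require Import Reals.
Open Scope R_scope.

Definition f_alpha (alpha x : R) : R :=
  Rmax (1 / x)
       ((alpha * (2 - x) + sqrt (alpha ^ 2 * (2 - x) ^ 2 + 4 * (1 - alpha))) / 2).

Definition Omega (alpha x y : R) : Prop :=
  (1 < x /\ f_alpha alpha x < y) \/ (1 < y /\ f_alpha alpha y < x).

(* the modified coordinate: a~ = a if a < 1, and 2/(alpha(b-1)+2) if a = 1
   (only used when a <= 1) *)
Definition tilde (alpha a b : R) : R :=
  if Rlt_dec a 1 then a else 2 / (alpha * (b - 1) + 2).

Definition B_eqn (alpha b at_ s : R) : Prop :=
  alpha * b + at_ - 1 / at_ + (1 - alpha) * s - 1 / s = 0.

Definition B_step (alpha : R) (p q : R * R) : Prop :=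
  let a := fst p in
  let b := snd p in
  if Rle_dec a 1 then
    let at_ := tilde alpha a b in
    (exists! s, 0 < s /\ B_eqn alpha b at_ s) /\
    (exists s, 0 < s /\ B_eqn alpha b at_ s /\ q = (1 / at_, 1 / s))
  else if Rle_dec b 1 then
    let bt_ := tilde alpha b a in
    (exists! s, 0 < s /\ B_eqn alpha a bt_ s) /\
    (exists s, 0 < s /\ B_eqn alpha a bt_ s /\ q = (1 / s, 1 / bt_))
  else False.

Definition B_stop (p : R * R) : Prop := 1 < fst p /\ 1 < snd p.

(* Main.v *)
Require Import Defs.
From Stdlib Require Import Reals Lra Psatz Lia.
Open Scope R_scope.

Definition psi (a t : R) : R := t - (1 - a) / t.
Definition Dv (a p q : R) : R := p - (1 - a) / p - 2 * a + a * q.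
Definition Region (a p q : R) : Prop :=
  0 < p <= 1 /\ 1 < q /\ 1 < p * q /\ 0 < Dv a p q.
Definition sol (a c : R) : R := 2 / (c + sqrt (c * c + 4 * (1 - a))).

Lemma psi_lt a x y : 0 < a <= 1 -> 0 < x -> x < y -> psi a x < psi a y.
Proof.
  intros Ha Hx Hxy. unfold psi.
  assert (/ y < / x) by (apply Rinv_lt_contravar; nra).
  unfold Rdiv. nra.
Qed.

Lemma psi_le a x y : 0 < a <= 1 -> 0 < x -> x <= y -> psi a x <= psi a y.
Proof.
  intros Ha Hx [H|H]. left; now apply psi_lt. subst; lra.
Qed.

Lemma psi_inv a x y : 0 < a <= 1 -> 0 < x -> 0 < y -> psi a x < psi a y -> x < y.
Proof.
  intros Ha Hx Hy H. destruct (Rlt_le_dec x y) as [h|h]; auto.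
  pose proof (psi_le a y x Ha Hy h). lra.
Qed.

Lemma sol_spec a c : 0 < a <= 1 -> (a < 1 \/ 0 < c) ->
  0 < sol a c /\ (1 - a) * sol a c - 1 / sol a c = - c.
Proof.
  intros Ha Hc. unfold sol.
  set (S := sqrt (c * c + 4 * (1 - a))).
  assert (HS0 : 0 <= S) by apply sqrt_pos.
  assert (HS2 : S * S = c * c + 4 * (1 - a)) by (apply sqrt_sqrt; nra).
  assert (Hpos : 0 < c + S).
  { destruct Hc as [Hc|Hc]; [|lra].
    destruct (Rlt_le_dec 0 (c + S)) as [h|h]; auto. nra. }
  split.
  - apply Rdiv_lt_0_compat; lra.
  - assert (E : (1 - a) * (2 / (c + S)) - 1 / (2 / (c + S)) + c
                 = (4 * (1 - a) + c * c - S * S) / (2 * (c + S))) by (field; lra).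
    rewrite HS2 in E. 
    replace ((4 * (1 - a) + c * c - (c * c + 4 * (1 - a))) / (2 * (c + S))) with 0 in E
      by (field; lra). lra.
Qed.

Lemma uniq_s a s1 s2 : a <= 1 -> 0 < s1 -> 0 < s2 ->
  (1 - a) * s1 - 1 / s1 = (1 - a) * s2 - 1 / s2 -> s1 = s2.
Proof.
  intros Ha H1 H2 E.
  destruct (Rtotal_order s1 s2) as [h|[h|h]]; auto.
  - assert (/ s2 < / s1) by (apply Rinv_lt_contravar; nra). unfold Rdiv in E. nra.
  - assert (/ s1 < / s2) by (apply Rinv_lt_contravar; nra). unfold Rdiv in E. nra.
Qed.
Lemma s_facts a q pt : 0 < a <= 1 -> 0 < pt ->
  (a < 1 \/ 0 < a * q + pt - 1 / pt) ->
  0 < sol a (a * q + pt - 1 / pt) /\ B_eqn a q pt (sol a (a * q + pt - 1 / pt)) /\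
  (forall s', 0 < s' -> B_eqn a q pt s' -> s' = sol a (a * q + pt - 1 / pt)) /\
  psi a (1 / sol a (a * q + pt - 1 / pt)) = a * q + pt - 1 / pt.
Proof.
  intros Ha Hpt Hc.
  destruct (sol_spec a (a * q + pt - 1 / pt) Ha Hc) as [Hs Es].
  set (s := sol a (a * q + pt - 1 / pt)) in *.
  split; [exact Hs|]. split; [unfold B_eqn; lra|]. split.
  - intros s' Hs' E'. unfold B_eqn in E'. apply (uniq_s a); try lra.
  - unfold psi. replace ((1 - a) / (1 / s)) with ((1 - a) * s) by (field; lra). lra.
Qed.

Lemma core a p q : 0 < a <= 1 -> Region a p q ->
  let pt := tilde a p q in let s := sol a (a * q + pt - 1 / pt) in
  0 < pt <= p /\ 0 < s /\ B_eqn a q pt s /\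
  (forall s', 0 < s' -> B_eqn a q pt s' -> s' = s) /\ s <= q /\
  (p = 1 -> 1 < 1 / pt /\ 1 < 1 / s) /\
  (p < 1 -> pt = p /\ p < 1 / s /\ psi a (1 / s) = psi a p + a * (q - 1 / p) /\
            Dv a (1 / s) (1 / p) = Dv a p q).
Proof.
  intros Ha [[Hp0 Hp1] [Hq [Hpq HD]]] pt s.
  assert (Hiq : 1 / q < p).
  { apply Rmult_lt_reg_r with q; [lra|]. field_simplify; [|lra]. nra. }
  assert (Hip : 1 / p < q).
  { apply Rmult_lt_reg_r with p; [lra|]. field_simplify; [|lra]. nra. }
  destruct (Rlt_le_dec p 1) as [Hlt|Hge].
  - assert (Ept : pt = p) by (unfold pt, tilde; destruct (Rlt_dec p 1); lra).
    assert (Hc : a < 1 \/ 0 < a * q + pt - 1 / pt).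
    { destruct (Rlt_le_dec a 1) as [h|h]; [now left|right].
      rewrite Ept. assert (a = 1) by lra. subst a. lra. }
    destruct (s_facts a q pt Ha ltac:(lra) Hc) as [Hs [Hb [Hu Hpsi]]].
    fold s in Hs, Hb, Hu, Hpsi.
    assert (Hps : psi a (1 / s) = psi a p + a * (q - 1 / p)).
    { rewrite Hpsi, Ept. unfold psi. field. lra. }
    assert (Hgt : p < 1 / s).
    { apply (psi_inv a); try lra. apply Rdiv_lt_0_compat; lra.
      rewrite Hps. assert (0 < a * (q - 1 / p)); [apply Rmult_lt_0_compat; try lra|lra]. }
    split; [lra|]. split; [exact Hs|]. split; [exact Hb|]. split; [exact Hu|].
    split.
    + assert (1 / q < 1 / s) by lra.
      destruct (Rle_lt_dec s q) as [h|h]; auto.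
      assert (1 / q < 1 / s) by lra.
      assert (/ q < / s) by (unfold Rdiv in *; lra).
      assert (/ q > / s)%R by (apply Rinv_lt_contravar; nra). lra.
    + split; [intros; lra|]. intros _. split; [exact Ept|]. split; [exact Hgt|].
      split; [exact Hps|].
      unfold Dv. replace ((1 - a) / (1 / s)) with ((1 - a) * s) by (field; lra).
      assert (E2 : 1 / s - (1 - a) * s = a * q + p - 1 / p).
      { rewrite <- Ept. rewrite <- Hpsi. unfold psi. field. lra. }
      replace ((1 - a) / (1 / p)) with ((1 - a) * p) by (field; lra).
      assert (E3 : a * (1 / p) = a / p) by (field; lra).
      rewrite E3. 
      replace (1 / s - (1 - a) * s - 2 * a + a / p) with (a * q + p - 1 / p - 2 * a + a / p) by lra.
      field. lra.
  - assert (Hp : p = 1) by lra. subst p.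
    set (k := a * (q - 1) + 2).
    assert (Hk : 2 < k) by (unfold k; nra).
    assert (Ept : pt = 2 / k) by (unfold pt, tilde; destruct (Rlt_dec 1 1); [lra|reflexivity]).
    assert (Hc0 : a * q + pt - 1 / pt = (k - 2) * (k - 2) / (2 * k) + a).
    { rewrite Ept. unfold k in *. field. nra. }
    assert (Hc1 : a < a * q + pt - 1 / pt).
    { rewrite Hc0. assert (0 < (k - 2) * (k - 2) / (2 * k)); [|lra].
      apply Rdiv_lt_0_compat; nra. }
    assert (Hpt0 : 0 < pt) by (rewrite Ept; apply Rdiv_lt_0_compat; lra).
    destruct (s_facts a q pt Ha Hpt0 ltac:(right; lra)) as [Hs [Hb [Hu Hpsi]]].
    fold s in Hs, Hb, Hu, Hpsi.
    assert (Hgt : 1 < 1 / s).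
    { apply (psi_inv a); try lra. apply Rdiv_lt_0_compat; lra.
      rewrite Hpsi. unfold psi. replace ((1 - a) / 1) with (1 - a) by field. lra. }
    assert (Hpt1 : pt < 1).
    { rewrite Ept. apply Rmult_lt_reg_r with k; [lra|]. field_simplify; lra. }
    split; [lra|]. split; [exact Hs|]. split; [exact Hb|]. split; [exact Hu|].
    split.
    + destruct (Rle_lt_dec s 1) as [h|h]; [lra|].
      assert (1 / s < 1); [|lra].
      apply Rmult_lt_reg_r with s; [lra|]. field_simplify; lra.
    + split; [|intros; lra]. intros _. split; [|exact Hgt].
      rewrite Ept. replace (1 / (2 / k)) with (k / 2) by (field; lra). lra.
Qed.
Lemma step2 a p q : 0 < a <= 1 -> Region a p q ->
  B_step a (p, q) (1 / tilde a p q, 1 / sol a (a * q + tilde a p q - 1 / tilde a p q)).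
Proof.
  intros Ha HR. pose proof (core a p q Ha HR) as C. cbv zeta in C.
  destruct C as [Hpt [Hs [Hb [Hu _]]]].
  destruct HR as [[Hp0 Hp1] _].
  unfold B_step; simpl. destruct (Rle_dec p 1) as [_|h]; [|lra].
  split.
  - exists (sol a (a * q + tilde a p q - 1 / tilde a p q)). split; [split; auto|].
    intros s' [Hs' Hb']. symmetry. now apply Hu.
  - exists (sol a (a * q + tilde a p q - 1 / tilde a p q)). split; [auto|split; auto].
Qed.

Lemma step3 a p q : 0 < a <= 1 -> Region a p q ->
  B_step a (q, p) (1 / sol a (a * q + tilde a p q - 1 / tilde a p q), 1 / tilde a p q).
Proof.
  intros Ha HR. pose proof (core a p q Ha HR) as C. cbv zeta in C.
  destruct C as [Hpt [Hs [Hb [Hu _]]]].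
  destruct HR as [[Hp0 Hp1] [Hq _]].
  unfold B_step; simpl. destruct (Rle_dec q 1) as [h|_]; [lra|].
  destruct (Rle_dec p 1) as [_|h]; [|lra].
  split.
  - exists (sol a (a * q + tilde a p q - 1 / tilde a p q)). split; [split; auto|].
    intros s' [Hs' Hb']. symmetry. now apply Hu.
  - exists (sol a (a * q + tilde a p q - 1 / tilde a p q)). split; [auto|split; auto].
Qed.

Lemma exp_le1 x : x <= 0 -> exp x <= 1.
Proof.
  intros [h|h]. left. rewrite <- exp_0. now apply exp_increasing. subst; rewrite exp_0; lra.
Qed.

Lemma g_swap gamma (g : R -> R -> R) x y : 0 < x -> 0 < y ->
  exp (gamma * (x + y)) * g x y = exp (gamma * (1 / x + 1 / y)) * g (1 / x) (1 / y) ->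
  g x y = exp (gamma * (1 / x + 1 / y - x - y)) * g (1 / x) (1 / y).
Proof.
  intros Hx Hy E.
  replace (gamma * (1 / x + 1 / y - x - y)) with (gamma * (1 / x + 1 / y) + - (gamma * (x + y))) by ring.
  rewrite exp_plus, exp_Ropp.
  apply Rmult_eq_reg_l with (exp (gamma * (x + y))).
  2: { pose proof (exp_pos (gamma * (x + y))); lra. }
  rewrite E. field. pose proof (exp_pos (gamma * (x + y))); lra.
Qed.
Definition GH (alpha gamma : R) (g g0 g1 : R -> R -> R) : Prop :=
  0 <= gamma /\
  (forall x y, 0 < x -> 0 < y -> 0 < g x y) /\
  (forall x y, 0 < x -> 0 < y -> 0 <= g0 x y) /\
  (forall x y, 0 < x -> 0 < y -> 0 <= g1 x y) /\
  (forall x y, 0 < x -> 0 < y -> g x y = g0 x y + g1 x y) /\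
  (forall x y, 0 < x -> 0 < y ->
     exp (gamma * (x + y)) * g x y = exp (gamma * (1 / x + 1 / y)) * g (1 / x) (1 / y)) /\
  (forall x x' y, 0 < x' -> x' <= x -> 0 < y ->
     g1 x y <= exp (- alpha * gamma * (x - x')) * g1 x' y) /\
  (forall x y y', 0 < y' -> y' <= y -> 0 < x ->
     g1 x y <= exp (- alpha * gamma * (y - y')) * g1 x y').

Lemma gstep2 a gamma g g0 g1 p q : GH a gamma g g0 g1 -> 0 < a <= 1 -> Region a p q ->
  g1 p q <= g (1 / tilde a p q) (1 / sol a (a * q + tilde a p q - 1 / tilde a p q)).
Proof.
  intros [Hga [Hgp [Hg0 [Hg1 [Hsum [Hi [Hii1 Hii2]]]]]]] Ha HR.
  pose proof (core a p q Ha HR) as C. cbv zeta in C.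
  set (A := tilde a p q) in *.
  set (S := sol a (a * q + A - 1 / A)) in *.
  destruct C as [Hpt [Hs [Hb [_ [HSq _]]]]].
  destruct HR as [[Hp0 Hp1] [Hq _]].
  pose proof (Hii1 p A q ltac:(lra) ltac:(lra) ltac:(lra)) as h1.
  pose proof (Hii2 A q S ltac:(lra) ltac:(lra) ltac:(lra)) as h2.
  assert (h3 : g1 A S <= g A S).
  { rewrite (Hsum A S) by lra. pose proof (Hg0 A S ltac:(lra) ltac:(lra)). lra. }
  pose proof (g_swap gamma g A S ltac:(lra) ltac:(lra) (Hi A S ltac:(lra) ltac:(lra))) as h4.
  assert (HG : 0 < g (1 / A) (1 / S)).
  { apply Hgp; apply Rdiv_lt_0_compat; lra. }
  set (G := g (1 / A) (1 / S)) in *.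
  assert (h5 : g1 p q <= exp (- a * gamma * (p - A)) * (exp (- a * gamma * (q - S)) *
                 (exp (gamma * (1 / A + 1 / S - A - S)) * G))).
  { eapply Rle_trans; [apply h1|]. apply Rmult_le_compat_l; [left; apply exp_pos|].
    eapply Rle_trans; [apply h2|]. apply Rmult_le_compat_l; [left; apply exp_pos|].
    rewrite <- h4. exact h3. }
  rewrite <- !Rmult_assoc, <- !exp_plus in h5.
  unfold B_eqn in Hb.
  replace (- a * gamma * (p - A) + - a * gamma * (q - S) + gamma * (1 / A + 1 / S - A - S))
    with (a * gamma * (A - p) - gamma * (a * q + A - 1 / A + (1 - a) * S - 1 / S)) in h5
    by ring.
  rewrite Hb in h5.
  assert (exp (a * gamma * (A - p) - gamma * 0) <= 1).
  { apply exp_le1. assert (0 <= a * gamma) by nra. nra. }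
  nra.
Qed.

Lemma gstep3 a gamma g g0 g1 p q : GH a gamma g g0 g1 -> 0 < a <= 1 -> Region a p q ->
  g1 q p <= g (1 / sol a (a * q + tilde a p q - 1 / tilde a p q)) (1 / tilde a p q).
Proof.
  intros [Hga [Hgp [Hg0 [Hg1 [Hsum [Hi [Hii1 Hii2]]]]]]] Ha HR.
  pose proof (core a p q Ha HR) as C. cbv zeta in C.
  set (A := tilde a p q) in *.
  set (S := sol a (a * q + A - 1 / A)) in *.
  destruct C as [Hpt [Hs [Hb [_ [HSq _]]]]].
  destruct HR as [[Hp0 Hp1] [Hq _]].
  pose proof (Hii2 q p A ltac:(lra) ltac:(lra) ltac:(lra)) as h1.
  pose proof (Hii1 q S A ltac:(lra) ltac:(lra) ltac:(lra)) as h2.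
  assert (h3 : g1 S A <= g S A).
  { rewrite (Hsum S A) by lra. pose proof (Hg0 S A ltac:(lra) ltac:(lra)). lra. }
  pose proof (g_swap gamma g S A ltac:(lra) ltac:(lra) (Hi S A ltac:(lra) ltac:(lra))) as h4.
  assert (HG : 0 < g (1 / S) (1 / A)).
  { apply Hgp; apply Rdiv_lt_0_compat; lra. }
  set (G := g (1 / S) (1 / A)) in *.
  assert (h5 : g1 q p <= exp (- a * gamma * (p - A)) * (exp (- a * gamma * (q - S)) *
                 (exp (gamma * (1 / S + 1 / A - S - A)) * G))).
  { eapply Rle_trans; [apply h1|]. apply Rmult_le_compat_l; [left; apply exp_pos|].
    eapply Rle_trans; [apply h2|]. apply Rmult_le_compat_l; [left; apply exp_pos|].
    rewrite <- h4. exact h3. }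
  rewrite <- !Rmult_assoc, <- !exp_plus in h5.
  unfold B_eqn in Hb.
  replace (- a * gamma * (p - A) + - a * gamma * (q - S) + gamma * (1 / S + 1 / A - S - A))
    with (a * gamma * (A - p) - gamma * (a * q + A - 1 / A + (1 - a) * S - 1 / S)) in h5
    by ring.
  rewrite Hb in h5.
  assert (exp (a * gamma * (A - p) - gamma * 0) <= 1).
  { apply exp_le1. assert (0 <= a * gamma) by nra. nra. }
  nra.
Qed.
Definition Goal (alpha : R) (g g0 g1 : R -> R -> R) (x y : R) : Prop :=
  exists (N : nat) (pts : nat -> R * R),
    (1 <= N)%nat /\
    pts 0%nat = (x, y) /\
    (forall i, (i + 1 < N)%nat -> B_step alpha (pts i) (pts (S i))) /\
    B_stop (pts (N - 1)%nat) /\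
    g x y <= sum_f_R0 (fun i => g0 (fst (pts i)) (snd (pts i))) (N - 1)
             + g1 (fst (pts (N - 1)%nat)) (snd (pts (N - 1)%nat)).

Lemma Goal_stop a g g0 g1 x y : (forall x y, 0 < x -> 0 < y -> g x y = g0 x y + g1 x y) ->
  1 < x -> 1 < y -> Goal a g g0 g1 x y.
Proof.
  intros Hsum Hx Hy. exists 1%nat, (fun _ => (x, y)).
  split; [lia|]. split; [reflexivity|]. split; [intros; lia|].
  split; [unfold B_stop; simpl; lra|]. simpl. rewrite Hsum by lra. lra.
Qed.

Lemma Goal_cons a g g0 g1 x y x' y' :
  (forall x y, 0 < x -> 0 < y -> g x y = g0 x y + g1 x y) ->
  0 < x -> 0 < y -> B_step a (x, y) (x', y') -> g1 x y <= g x' y' ->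
  Goal a g g0 g1 x' y' -> Goal a g g0 g1 x y.
Proof.
  intros Hsum Hx Hy HB Hg [N [pts [HN [H0 [Hst [Hstop Hin]]]]]].
  exists (S N), (fun i => match i with O => (x, y) | S j => pts j end).
  split; [lia|]. split; [reflexivity|]. split.
  - intros [|i] Hi. rewrite H0. exact HB. apply Hst. lia.
  - destruct N as [|m]; [lia|].
    replace (S (S m) - 1)%nat with (S m) by lia.
    replace (S m - 1)%nat with m in Hstop, Hin by lia.
    split; [exact Hstop|].
    rewrite decomp_sum by lia. simpl pred. simpl fst; simpl snd.
    rewrite Hsum by lra. lra.
Qed.
Lemma next_facts a p q d p0 delta m : 0 < a <= 1 -> Region a p q -> p0 <= p ->
  Dv a p q = d -> delta <= a * (q - 1 / p) -> a - psi a p < INR (S m) * delta -> p < 1 ->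
  1 / sol a (a * q + tilde a p q - 1 / tilde a p q) <= 1 ->
  Region a (1 / sol a (a * q + tilde a p q - 1 / tilde a p q)) (1 / tilde a p q) /\
  p0 <= 1 / sol a (a * q + tilde a p q - 1 / tilde a p q) /\
  Dv a (1 / sol a (a * q + tilde a p q - 1 / tilde a p q)) (1 / tilde a p q) = d /\
  a - psi a (1 / sol a (a * q + tilde a p q - 1 / tilde a p q)) < INR m * delta.
Proof.
  intros Ha HR Hp0 Hd Hdel Hn Hp1 Hu.
  pose proof (core a p q Ha HR) as C. cbv zeta in C.
  set (A := tilde a p q) in *.
  set (S := sol a (a * q + A - 1 / A)) in *.
  destruct C as [Hpt [Hs [Hb [_ [HSq [_ C]]]]]].
  destruct (C Hp1) as [EA [Hlt [Hpsi HD]]].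
  rewrite EA. destruct HR as [[Hpp Hp1'] [Hq [Hpq HD0]]].
  rewrite S_INR in Hn.
  split; [|split; [lra|split; [lra|lra]]].
  split; [split; [apply Rdiv_lt_0_compat; lra|lra]|].
  split; [apply Rmult_lt_reg_r with p; [lra|]; field_simplify; lra|].
  split.
  - apply Rmult_lt_reg_r with p; [lra|]. field_simplify; [|lra]. lra.
  - rewrite HD. exact HD0.
Qed.

Lemma ind a gamma g g0 g1 d p0 delta : GH a gamma g g0 g1 -> 0 < a <= 1 -> 0 < delta ->
  (forall p q, Region a p q -> p0 <= p -> Dv a p q = d -> delta <= a * (q - 1 / p)) ->
  forall n x y,
  ((Region a x y /\ p0 <= x /\ Dv a x y = d /\ a - psi a x < INR n * delta) \/
   (Region a y x /\ p0 <= y /\ Dv a y x = d /\ a - psi a y < INR n * delta)) ->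
  Goal a g g0 g1 x y.
Proof.
  intros HG Ha Hdel HE n. induction n as [|m IH]; intros x y H.
  - exfalso. simpl in H.
    destruct H as [[[[Hx0 Hx1] _] [_ [_ H]]] | [[[Hx0 Hx1] _] [_ [_ H]]]].
    + pose proof (psi_le a x 1 Ha Hx0 Hx1). unfold psi at 2 in H0.
      replace ((1 - a) / 1) with (1 - a) in H0 by field. lra.
    + pose proof (psi_le a y 1 Ha Hx0 Hx1). unfold psi at 2 in H0.
      replace ((1 - a) / 1) with (1 - a) in H0 by field. lra.
  - pose proof HG as HG'. destruct HG' as [_ [_ [_ [_ [Hsum _]]]]].
    destruct H as [[HR [Hp0 [Hd Hn]]] | [HR [Hp0 [Hd Hn]]]].
    + pose proof (core a x y Ha HR) as C. cbv zeta in C.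
      destruct C as [Hpt [Hs [_ [_ [_ [C1 C2]]]]]].
      pose proof HR as [[Hx0 Hx1] [Hy [_ _]]].
      apply (Goal_cons a g g0 g1 x y _ _ Hsum ltac:(lra) ltac:(lra)
               (step2 a x y Ha HR) (gstep2 a gamma g g0 g1 x y HG Ha HR)).
      destruct (Rlt_le_dec x 1) as [Hlt|Hge].
      * destruct (C2 Hlt) as [EA [Hlt2 _]].
        destruct (Rlt_le_dec 1 (1 / sol a (a * y + tilde a x y - 1 / tilde a x y))) as [h|h].
        -- apply Goal_stop; auto. rewrite EA. apply Rmult_lt_reg_r with x; [lra|].
           field_simplify; lra.
        -- apply IH. right.
           apply (next_facts a x y d p0 delta m Ha HR Hp0 Hd (HE x y HR Hp0 Hd) Hn Hlt h).
      * destruct (C1 ltac:(lra)). apply Goal_stop; auto.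
    + pose proof (core a y x Ha HR) as C. cbv zeta in C.
      destruct C as [Hpt [Hs [_ [_ [_ [C1 C2]]]]]].
      pose proof HR as [[Hy0 Hy1] [Hx [_ _]]].
      apply (Goal_cons a g g0 g1 x y _ _ Hsum ltac:(lra) ltac:(lra)
               (step3 a y x Ha HR) (gstep3 a gamma g g0 g1 y x HG Ha HR)).
      destruct (Rlt_le_dec y 1) as [Hlt|Hge].
      * destruct (C2 Hlt) as [EA [Hlt2 _]].
        destruct (Rlt_le_dec 1 (1 / sol a (a * x + tilde a y x - 1 / tilde a y x))) as [h|h].
        -- apply Goal_stop; auto. rewrite EA. apply Rmult_lt_reg_r with y; [lra|].
           field_simplify; lra.
        -- apply IH. left.
           apply (next_facts a y x d p0 delta m Ha HR Hp0 Hd (HE y x HR Hp0 Hd) Hn Hlt h).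
      * destruct (C1 ltac:(lra)). apply Goal_stop; auto.
Qed.
Lemma omega_half a x y : 0 < a <= 1 -> 1 < x -> f_alpha a x < y -> y <= 1 -> Region a y x.
Proof.
  intros Ha Hx Hf Hy. unfold f_alpha in Hf. apply Rmax_Rlt in Hf as [H1 H2].
  assert (Hix : 0 < 1 / x) by (apply Rdiv_lt_0_compat; lra).
  assert (Hy0 : 0 < y) by lra.
  set (B := a * (2 - x)) in *.
  set (S := sqrt (a ^ 2 * (2 - x) ^ 2 + 4 * (1 - a))) in *.
  assert (HS0 : 0 <= S) by apply sqrt_pos.
  assert (HS2 : S * S = B * B + 4 * (1 - a)).
  { unfold S. rewrite sqrt_sqrt. unfold B; ring.
    apply Rplus_le_le_0_compat; [apply Rmult_le_pos; apply pow2_ge_0|lra]. }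
  assert (P : 0 < y * y - B * y - (1 - a)).
  { assert (h1 : 0 < y - (B + S) / 2) by lra.
    assert (h2 : 0 < y - (B - S) / 2) by lra.
    assert (h3 : 0 < (y - (B + S) / 2) * (y - (B - S) / 2)) by (apply Rmult_lt_0_compat; lra).
    replace ((y - (B + S) / 2) * (y - (B - S) / 2)) with (y * y - B * y + (B * B - S * S) / 4) in h3
      by field.
    rewrite HS2 in h3. lra. }
  split; [lra|]. split; [lra|]. split.
  - apply Rmult_lt_reg_r with (1 / x); [lra|]. field_simplify; lra.
  - unfold Dv. replace (y - (1 - a) / y - 2 * a + a * x) with ((y * y - B * y - (1 - a)) / y)
      by (unfold B; field; lra).
    apply Rdiv_lt_0_compat; lra.
Qed.

Lemma omega_cases a x y : 0 < a <= 1 -> Omega a x y ->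
  (1 < x /\ 1 < y) \/ Region a x y \/ Region a y x.
Proof.
  intros Ha [[Hx Hf]|[Hy Hf]].
  - destruct (Rlt_le_dec 1 y) as [h|h]; [now left|right; right].
    now apply omega_half.
  - destruct (Rlt_le_dec 1 x) as [h|h]; [now left|right; left].
    now apply omega_half.
Qed.

Lemma HE_lemma a p q : 0 < a <= 1 -> Region a p q ->
  forall p' q', Region a p' q' -> p <= p' -> Dv a p' q' = Dv a p q ->
  Rmin (a * (p * q - 1)) (Dv a p q) <= a * (q' - 1 / p').
Proof.
  intros Ha [[Hp0 Hp1] [Hq [Hpq HD]]] p' q' [[Hp0' Hp1'] [Hq' [Hpq' HD']]] Hpp Hd.
  set (d := Dv a p q) in *.
  set (m := Rmin (a * (p * q - 1)) d).
  assert (Hm1 : m <= a * (p * q - 1)) by apply Rmin_l.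
  assert (Hm2 : m <= d) by apply Rmin_r.
  assert (Hm0 : 0 < m).
  { unfold m. apply Rmin_glb_lt; [apply Rmult_lt_0_compat; lra|lra]. }
  assert (E1 : d * p = p * p - (1 - a) - 2 * a * p + a * q * p).
  { unfold d, Dv. field. lra. }
  assert (E2 : d * p' = p' * p' - (1 - a) - 2 * a * p' + a * q' * p').
  { rewrite <- Hd. unfold Dv. field. lra. }
  set (X := a * (q' - 1 / p')).
  assert (E3 : X * p' = a * q' * p' - a) by (unfold X; field; lra).
  set (F := fun t => (d + 2 * a) * t - t * t - (2 * a - 1)).
  assert (Fp : F p = a * (p * q - 1)).
  { unfold F. replace ((d + 2 * a) * p) with (d * p + 2 * a * p) by ring. rewrite E1. ring. }
  assert (Fp' : F p' = X * p').
  { unfold F. replace ((d + 2 * a) * p') with (d * p' + 2 * a * p') by ring. rewrite E2, E3. ring. }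
  assert (Fc : F p' * (1 - p) = (1 - p') * F p + (p' - p) * F 1 + (p' - p) * (1 - p') * (1 - p))
    by (unfold F; ring).
  assert (HF1 : F 1 = d) by (unfold F; ring).
  assert (HFm : m <= F p').
  { destruct (Rlt_le_dec p 1) as [h|h].
    - apply Rmult_le_reg_r with (1 - p); [lra|]. rewrite Fc, Fp, HF1.
      assert (0 <= (p' - p) * (1 - p') * (1 - p)).
      { apply Rmult_le_pos; [apply Rmult_le_pos|]; lra. }
      assert (m * (1 - p') <= a * (p * q - 1) * (1 - p')) by (apply Rmult_le_compat_r; lra).
      assert (m * (p' - p) <= d * (p' - p)) by (apply Rmult_le_compat_r; lra).
      lra.
    - assert (p' = 1) by lra. subst p'. lra. }
  assert (EX : X = F p' / p') by (rewrite Fp'; field; lra).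
  assert (h : 0 <= F p' * (1 / p' - 1)).
  { apply Rmult_le_pos; [lra|]. assert (1 <= 1 / p'); [|lra].
    apply Rmult_le_reg_r with p'; [lra|]. field_simplify; lra. }
  rewrite EX. replace (F p' / p') with (F p' + F p' * (1 / p' - 1)) by (field; lra). lra.
Qed.
Lemma delta_pos a p q : 0 < a <= 1 -> Region a p q -> 0 < Rmin (a * (p * q - 1)) (Dv a p q).
Proof.
  intros Ha [_ [_ [Hpq HD]]]. apply Rmin_glb_lt; [apply Rmult_lt_0_compat; lra|lra].
Qed.

Lemma arch (A delta : R) : 0 < delta -> exists n : nat, A < INR n * delta.
Proof.
  intros Hd. destruct (INR_unbounded (A / delta)) as [n Hn]. exists n.
  apply Rmult_gt_compat_r with (r := delta) in Hn; [|lra].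
  replace (A / delta * delta) with A in Hn by (field; lra). lra.
Qed.

Theorem lemma1 (alpha gamma : R) (g g0 g1 : R -> R -> R)
  (Halpha : 0 < alpha <= 1) (Hgamma : 0 <= gamma)
  (Hgpos : forall x y, 0 < x -> 0 < y -> 0 < g x y)
  (Hg0 : forall x y, 0 < x -> 0 < y -> 0 <= g0 x y)
  (Hg1 : forall x y, 0 < x -> 0 < y -> 0 <= g1 x y)
  (Hsum : forall x y, 0 < x -> 0 < y -> g x y = g0 x y + g1 x y)
  (Hi : forall x y, 0 < x -> 0 < y ->
     exp (gamma * (x + y)) * g x y = exp (gamma * (1 / x + 1 / y)) * g (1 / x) (1 / y))
  (Hii1 : forall x x' y, 0 < x' -> x' <= x -> 0 < y ->
     g1 x y <= exp (- alpha * gamma * (x - x')) * g1 x' y)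
  (Hii2 : forall x y y', 0 < y' -> y' <= y -> 0 < x ->
     g1 x y <= exp (- alpha * gamma * (y - y')) * g1 x y') :
  forall x y, Omega alpha x y ->
  exists (N : nat) (pts : nat -> R * R),
    (1 <= N)%nat /\
    pts 0%nat = (x, y) /\
    (forall i, (i + 1 < N)%nat -> B_step alpha (pts i) (pts (S i))) /\
    B_stop (pts (N - 1)%nat) /\
    g x y <= sum_f_R0 (fun i => g0 (fst (pts i)) (snd (pts i))) (N - 1)
             + g1 (fst (pts (N - 1)%nat)) (snd (pts (N - 1)%nat)).
Proof.
  intros x y HO.
  assert (HG : GH alpha gamma g g0 g1) by (repeat split; auto).
  change (Goal alpha g g0 g1 x y).
  destruct (omega_cases alpha x y Halpha HO) as [[Hx Hy]|[HR|HR]].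
  - now apply Goal_stop.
  - pose proof (delta_pos alpha x y Halpha HR) as Hd.
    destruct (arch (alpha - psi alpha x) _ Hd) as [n Hn].
    apply (ind alpha gamma g g0 g1 (Dv alpha x y) x _ HG Halpha Hd) with n.
    + intros p q HR' Hp0 Hdv. apply (HE_lemma alpha x y Halpha HR p q HR' Hp0 Hdv).
    + left. repeat split; try apply HR; try lra; auto.
  - pose proof (delta_pos alpha y x Halpha HR) as Hd.
    destruct (arch (alpha - psi alpha y) _ Hd) as [n Hn].
    apply (ind alpha gamma g g0 g1 (Dv alpha y x) y _ HG Halpha Hd) with n.
    + intros p q HR' Hp0 Hdv. apply (HE_lemma alpha y x Halpha HR p q HR' Hp0 Hdv).
    + right. repeat split; try apply HR; try lra; auto.
Qed.
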